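(* Let $-3<c<-2$, $k=k(c)$, and put $F_c(z)=D_c(2z)=1+\sum_{n\ge1}\frac{z^n}{r_1(c)\cdots r_n(c)}$ and $M_c(z)=\frac{z^k}{r_1(c)\cdots r_k(c)}$. Then for every $z$ with $4r_k(c)<|z|<9r_k(c)$, $$\left|1-\frac{F_c(z)}{M_c(z)}\right|\le\frac23 .$$
   Context: For real $c<-2$ let $f_c(z)=z^2+c$ and $r_n(c)=f_c^{\circ n}(0)$, so $r_1(c)=c$ and $r_{n+1}(c)=r_n(c)^2+c$; $D_c(\lambda)=1+\sum_{n=1}^{\infty}\frac{\lambda^n}{2^n r_1(c)\cdots r_n(c)}$. For $-3<c<-2$, $k(c)$ denotes the smallest positive integer $k$ such that $r_{k+1}(c)/r_k(c)\ge 36$. *)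

(* Defs.v *)
From Stdlib Require Import Reals Lra.
Open Scope R_scope.

(* r n c = f_c^{n}(0): r 0 = 0, r (n+1) = (r n)^2 + c, so r 1 = c. *)
Fixpoint r (n : nat) (c : R) : R :=
  match n with
  | O => 0
  | S m => (r m c) ^ 2 + c
  end.

Fixpoint rprod (n : nat) (c : R) : R :=
  match n with
  | O => 1
  | S m => rprod m c * r (S m) c
  end.

Definition is_k (c : R) (k : nat) : Prop :=
  (1 <= k)%nat /\ r (S k) c / r k c >= 36 /\
  (forall j : nat, (1 <= j)%nat -> (j < k)%nat -> r (S j) c / r j c < 36).

Definition Cx : Type := (R * R)%type.
Definition Cre (z : Cx) : R := fst z.
Definition Cim (z : Cx) : R := snd z.
Definition RtoC (x : R) : Cx := (x, 0).
Definition Cadd (z w : Cx) : Cx := (Cre z + Cre w, Cim z + Cim w).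
Definition Csub (z w : Cx) : Cx := (Cre z - Cre w, Cim z - Cim w).
Definition Cmul (z w : Cx) : Cx :=
  (Cre z * Cre w - Cim z * Cim w, Cre z * Cim w + Cim z * Cre w).
Definition Cmod (z : Cx) : R := sqrt (Cre z ^ 2 + Cim z ^ 2).
Definition Cinv (z : Cx) : Cx :=
  (Cre z / (Cre z ^ 2 + Cim z ^ 2), - Cim z / (Cre z ^ 2 + Cim z ^ 2)).
Definition Cdiv (z w : Cx) : Cx := Cmul z (Cinv w).
Fixpoint Cpow (z : Cx) (n : nat) : Cx :=
  match n with
  | O => RtoC 1
  | S m => Cmul (Cpow z m) z
  end.

Definition Ccv (u : nat -> Cx) (l : Cx) : Prop :=
  forall eps : R, eps > 0 -> exists N : nat, forall n : nat, (n >= N)%nat ->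
    Cmod (Csub (u n) l) < eps.

Definition Fterm (c : R) (z : Cx) (n : nat) : Cx :=
  Cdiv (Cpow z n) (RtoC (rprod n c)).

Fixpoint Fpartial (c : R) (z : Cx) (N : nat) : Cx :=
  match N with
  | O => RtoC 1
  | S m => Cadd (Fpartial c z m) (Fterm c z (S m))
  end.

Definition Mc (c : R) (k : nat) (z : Cx) : Cx := Fterm c z k.

(* Main.v *)
Require Import Defs.
From Stdlib Require Import Reals Lra Lia Psatz.
Open Scope R_scope.

Lemma r_inv (c : R) : -3 < c < -2 -> forall n, (2 <= n)%nat ->
  2 <= r n c /\ r n c ^ 2 - r n c + c > 0.
Proof.
  intros Hc n Hn. induction Hn as [|n Hn IH].
  - simpl. assert (Hc3 : c^3*(c+2) > 0).
    { assert (c^3 < 0) by (simpl; nra). nra. }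
    split; nra.
  - simpl. destruct IH as [H1 H2]. simpl in H1, H2.
    set (x := r n c) in *.
    assert (Hy : x*(x*1) + c > x) by nra.
    split; nra.
Qed.

Lemma r_incr (c : R) : -3 < c < -2 -> forall n, (2 <= n)%nat -> r n c < r (S n) c.
Proof. intros Hc n Hn. destruct (r_inv c Hc n Hn). simpl. simpl in H0. nra. Qed.

Lemma r_mono (c : R) : -3 < c < -2 -> forall i j, (2 <= i)%nat -> (i <= j)%nat -> r i c <= r j c.
Proof.
  intros Hc i j Hi Hij. induction Hij. lra.
  pose proof (r_incr c Hc m ltac:(lia)). lra.
Qed.

Lemma k_facts (c : R) (k : nat) : -3 < c < -2 -> is_k c k ->
  (2 <= k)%nat /\ 36 < r k c /\ 36 * r k c <= r (S k) c.
Proof.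
  intros Hc [Hk1 [Hk2 _]].
  assert (Hk : (2 <= k)%nat).
  { destruct k as [|[|k]]; try lia.
    exfalso. simpl in Hk2. pose proof (r_inv c Hc 2 (le_n 2)) as [H _].
    assert (/ c < 0) by (apply Rinv_lt_0_compat; lra).
    unfold Rdiv in Hk2. change (r 2 c * / r 1 c >= 36) in Hk2.
    replace (r 1 c) with c in Hk2 by (simpl; ring).
    assert (r 2 c * / c < 0) by (apply Rmult_pos_neg; lra). lra. }
  split; auto.
  pose proof (r_inv c Hc k Hk) as [H _].
  assert (H36 : 36 * r k c <= r (S k) c).
  { unfold Rdiv in Hk2. apply Rge_le in Hk2.
    apply Rmult_le_compat_r with (r := r k c) in Hk2; [|lra].
    rewrite Rmult_assoc, Rinv_l in Hk2 by lra. lra. }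
  split; auto. simpl in H36. nra.
Qed.

Lemma r_nz (c : R) : -3 < c < -2 -> forall n, (1 <= n)%nat -> r n c <> 0.
Proof.
  intros Hc n Hn. destruct n as [|[|n]]; try lia.
  - simpl. lra.
  - pose proof (r_inv c Hc (S (S n)) ltac:(lia)). lra.
Qed.

Lemma rprod_nz (c : R) : -3 < c < -2 -> forall n, rprod n c <> 0.
Proof.
  intros Hc n. induction n; simpl. lra.
  apply Rmult_integral_contrapositive_currified; auto.
  apply (r_nz c Hc (S n)). lia.
Qed.

Definition tt (c X : R) (n : nat) : R := X ^ n / Rabs (rprod n c).

Lemma tt_S (c X : R) n : -3 < c < -2 ->
  tt c X (S n) = tt c X n * X / Rabs (r (S n) c).
Proof.
  intros Hc. unfold tt. simpl. rewrite Rabs_mult.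
  pose proof (rprod_nz c Hc n). pose proof (r_nz c Hc (S n) ltac:(lia)).
  assert (Rabs (rprod n c) <> 0) by (apply Rabs_no_R0; auto).
  assert (Rabs (r (S n) c) <> 0) by (apply Rabs_no_R0; auto).
  field. auto.
Qed.

Lemma tt_pos (c X : R) n : -3 < c < -2 -> 0 < X -> 0 < tt c X n.
Proof.
  intros Hc HX. unfold tt. apply Rdiv_lt_0_compat. apply pow_lt; auto.
  apply Rabs_pos_lt. apply rprod_nz; auto.
Qed.

Lemma rabs_le_rk (c : R) k : -3 < c < -2 -> (2 <= k)%nat -> 36 < r k c ->
  forall i, (1 <= i <= k)%nat -> Rabs (r i c) <= r k c.
Proof.
  intros Hc Hk H36 i Hi. destruct i as [|[|i]]; try lia.
  - simpl. rewrite Rabs_left by lra. lra.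
  - pose proof (r_inv c Hc (S (S i)) ltac:(lia)).
    rewrite Rabs_right by lra. apply r_mono; auto; lia.
Qed.

Lemma tt_desc (c X : R) k : -3 < c < -2 -> is_k c k -> 4 * r k c < X ->
  forall d, (d <= k)%nat -> tt c X (k - d) <= tt c X k * (1/4) ^ d.
Proof.
  intros Hc Hk HX. destruct (k_facts c k Hc Hk) as [Hk2 [H36 _]].
  induction d as [|d IH]; intros Hd.
  - rewrite Nat.sub_0_r. simpl. lra.
  - specialize (IH ltac:(lia)).
    assert (E : (k - d = S (k - S d))%nat) by lia.
    rewrite E in IH. rewrite tt_S in IH by auto.
    set (n := (k - S d)%nat) in *.
    pose proof (rabs_le_rk c k Hc Hk2 H36 (S n) ltac:(lia)) as Hr.
    assert (Hrp : 0 < Rabs (r (S n) c)) by (apply Rabs_pos_lt, r_nz; auto; lia).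
    pose proof (tt_pos c X n Hc ltac:(lra)).
    assert (Hq : tt c X n * X <= tt c X k * (1/4)^d * Rabs (r (S n) c)).
    { apply Rmult_le_compat_r with (r := Rabs (r (S n) c)) in IH; [|lra].
      unfold Rdiv in IH. rewrite Rmult_assoc, Rinv_l in IH by lra. lra. }
    simpl. assert (0 <= tt c X k * (1/4)^d).
    { apply Rmult_le_pos. pose proof (tt_pos c X k Hc ltac:(lra)); lra.
      apply pow_le; lra. }
    nra.
Qed.

Lemma tt_asc (c X : R) k : -3 < c < -2 -> is_k c k -> 0 < X -> X < 9 * r k c ->
  forall d, tt c X (k + d) <= tt c X k * (1/4) ^ d.
Proof.
  intros Hc Hk HX0 HX. destruct (k_facts c k Hc Hk) as [Hk2 [H36 H36']].
  induction d as [|d IH].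
  - rewrite Nat.add_0_r. simpl. lra.
  - rewrite Nat.add_succ_r, tt_S by auto.
    assert (Hr : r (S k) c <= r (S (k + d)) c) by (apply r_mono; auto; lia).
    rewrite Rabs_right by lra.
    pose proof (tt_pos c X (k+d) Hc HX0).
    assert (Hq : X / r (S (k + d)) c <= 1/4).
    { apply Rmult_le_reg_r with (r := r (S (k + d)) c). lra.
      unfold Rdiv. rewrite Rmult_assoc, Rinv_l by lra. lra. }
    assert (0 <= X / r (S (k + d)) c).
    { unfold Rdiv. apply Rmult_le_pos. lra. left. apply Rinv_0_lt_compat. lra. }
    unfold Rdiv at 1. rewrite Rmult_assoc. fold (X / r (S (k + d)) c).
    rewrite <- tech_pow_Rmult.
    replace (tt c X k * (1 / 4 * (1 / 4) ^ d)) with ((tt c X k * (1/4)^d) * (1/4)) by ring.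
    apply Rmult_le_compat; lra.
Qed.
From Coquelicot Require Import Coquelicot.

Lemma Cpow_eq (z : Cx) n : Defs.Cpow z n = Complex.Cpow z n.
Proof.
  induction n; simpl. reflexivity.
  rewrite IHn. change (Cmult (Complex.Cpow z n) z = Cmult z (Complex.Cpow z n)).
  apply Cmult_comm.
Qed.

Lemma Cmod_Fterm (c : R) (z : Cx) n : -3 < c < -2 ->
  Defs.Cmod (Fterm c z n) = tt c (Defs.Cmod z) n.
Proof.
  intros Hc. unfold Fterm, tt.
  change (Complex.Cmod (Cdiv (Defs.Cpow z n) (RtoC (rprod n c))) = Complex.Cmod z ^ n / Rabs (rprod n c)).
  rewrite Cmod_div, Cpow_eq, Cmod_pow, Cmod_R. reflexivity.
  intro H. apply (rprod_nz c Hc n). injection H. auto.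
Qed.

Lemma Fterm0 (c : R) (z : Cx) : Fterm c z 0 = Defs.RtoC 1.
Proof.
  unfold Fterm. simpl. unfold Defs.Cdiv, Defs.Cmul, Defs.Cinv, Defs.RtoC, Cre, Cim. simpl.
  f_equal; field.
Qed.

Lemma Fpartial_sum (c : R) (z : Cx) N : Fpartial c z N = sum_n (Fterm c z) N.
Proof.
  induction N.
  - rewrite sum_O, Fterm0. reflexivity.
  - rewrite sum_Sn. simpl. rewrite IHN. reflexivity.
Qed.

Lemma pow4 k : 4 ^ k * (1/4) ^ k = 1.
Proof. rewrite <- Rpow_mult_distr. replace (4 * (1/4)) with 1 by field. apply pow1. Qed.

Lemma tt_global (c X : R) k : -3 < c < -2 -> is_k c k -> 4 * r k c < X < 9 * r k c ->
  forall n, tt c X n <= tt c X k * 4 ^ k * (1/4) ^ n.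
Proof.
  intros Hc Hk HX n. destruct (k_facts c k Hc Hk) as [_ [H36 _]].
  destruct (Compare_dec.le_lt_dec n k) as [H|H].
  - replace n with (k - (k - n))%nat at 1 by lia.
    eapply Rle_trans. apply tt_desc; auto; try lra; lia.
    assert (E : 4 ^ k * (1/4) ^ n = 4 ^ (k - n)).
    { replace k with ((k - n) + n)%nat at 1 by lia. rewrite pow_add, Rmult_assoc, pow4. ring. }
    assert (0 < tt c X k) by (apply tt_pos; auto; lra).
    assert (1 <= 4 ^ (k - n)) by (apply pow_R1_Rle; lra).
    assert ((1/4) ^ (k - n) <= 1).
    { pose proof (pow4 (k - n)). assert (0 < (1/4)^(k-n)) by (apply pow_lt; lra). nra. }
    rewrite Rmult_assoc, E. nra.
  - replace n with (k + (n - k))%nat at 1 2 by lia.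
    eapply Rle_trans. apply tt_asc; auto; lra.
    rewrite pow_add, Rmult_assoc, <- (Rmult_assoc (4 ^ k)), pow4. lra.
Qed.

Lemma claimA (c : R) (z : Cx) k : -3 < c < -2 -> is_k c k -> 4 * r k c < Defs.Cmod z < 9 * r k c ->
  forall N, (N < k)%nat ->
  Defs.Cmod (Fpartial c z N) <= 4/3 * tt c (Defs.Cmod z) k * (1/4) ^ (k - N).
Proof.
  intros Hc Hk HX. induction N; intros HN.
  - simpl Fpartial. rewrite <- (Fterm0 c z), Cmod_Fterm by auto.
    pose proof (tt_desc c (Defs.Cmod z) k Hc Hk ltac:(lra) k (le_n k)).
    rewrite Nat.sub_diag in H. rewrite Nat.sub_0_r.
    assert (0 <= tt c (Defs.Cmod z) k * (1/4)^k).
    { apply Rmult_le_pos. pose proof (tt_pos c (Defs.Cmod z) k Hc ltac:(lra)); lra. apply pow_le; lra. }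
    lra.
  - specialize (IHN ltac:(lia)). simpl Fpartial.
    eapply Rle_trans. apply (Cmod_triangle (Fpartial c z N) (Fterm c z (S N))).
    change (Complex.Cmod (Fterm c z (S N))) with (Defs.Cmod (Fterm c z (S N))).
    rewrite Cmod_Fterm by auto.
    pose proof (tt_desc c (Defs.Cmod z) k Hc Hk ltac:(lra) (k - S N) ltac:(lia)).
    replace (k - (k - S N))%nat with (S N) in H by lia.
    replace (k - N)%nat with (S (k - S N)) in IHN by lia.
    simpl in IHN.
    assert (0 <= tt c (Defs.Cmod z) k * (1/4)^(k - S N)).
    { apply Rmult_le_pos. pose proof (tt_pos c (Defs.Cmod z) k Hc ltac:(lra)); lra. apply pow_le; lra. }
    change (Complex.Cmod (Fpartial c z N)) with (Defs.Cmod (Fpartial c z N)).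
    lra.
Qed.

Lemma Csub_Cadd (A b B : Cx) : Csub (Cadd A b) B = Cadd (Csub A B) b.
Proof. destruct A, b, B. unfold Csub, Cadd, Cre, Cim. simpl. f_equal; ring. Qed.

Lemma claimB (c : R) (z : Cx) k : -3 < c < -2 -> is_k c k -> 4 * r k c < Defs.Cmod z < 9 * r k c ->
  forall d,
  Defs.Cmod (Csub (Fpartial c z (k + d)) (Fpartial c z k)) <= tt c (Defs.Cmod z) k / 3 * (1 - (1/4) ^ d).
Proof.
  intros Hc Hk HX. induction d.
  - rewrite Nat.add_0_r. destruct (Fpartial c z k) as [a b].
    unfold Csub, Defs.Cmod, Cre, Cim; simpl.
    replace (a - a) with 0 by ring. replace (b - b) with 0 by ring.
    replace ((0 * (0 * 1) + 0 * (0 * 1))) with 0 by ring. rewrite sqrt_0. lra.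
  - rewrite Nat.add_succ_r. simpl Fpartial. rewrite Csub_Cadd.
    eapply Rle_trans. apply Cmod_triangle.
    change (Complex.Cmod (Fterm c z (S (k + d)))) with (Defs.Cmod (Fterm c z (S (k + d)))).
    change (Complex.Cmod (Csub (Fpartial c z (k + d)) (Fpartial c z k))) with
      (Defs.Cmod (Csub (Fpartial c z (k + d)) (Fpartial c z k))).
    rewrite Cmod_Fterm by auto.
    pose proof (tt_asc c (Defs.Cmod z) k Hc Hk ltac:(lra) ltac:(lra) (S d)).
    rewrite Nat.add_succ_r in H. simpl in H |- *.
    lra.
Qed.
Import Defs.

Theorem mainTheorem7 (c : R) (k : nat) (z : Cx) :
  -3 < c < -2 ->
  is_k c k ->
  4 * r k c < Cmod z < 9 * r k c ->
  exists F : Cx,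
    Ccv (Fpartial c z) F /\
    Cmod (Csub (RtoC 1) (Cdiv F (Mc c k z))) <= 2 / 3.
Proof.
  intros Hc Hk HX.
  destruct (k_facts c k Hc Hk) as [Hk2 [H36 _]].
  set (X := Cmod z) in *.
  set (m := tt c X k).
  assert (Hm : 0 < m) by (apply tt_pos; auto; lra).
  assert (Hex : ex_series (V := C_NormedModule) (Fterm c z)).
  { apply (ex_series_le (V := C_CompleteNormedModule) _ (fun n => m * 4 ^ k * (1/4) ^ n)).
    - intros n. change (Complex.Cmod (Fterm c z n) <= m * 4 ^ k * (1 / 4) ^ n).
      change (Complex.Cmod (Fterm c z n)) with (Cmod (Fterm c z n)).
      rewrite Cmod_Fterm by auto. apply tt_global; auto.
    - apply (ex_series_scal_l (V := R_NormedModule) (m * 4 ^ k) (fun n => (1/4)^n)).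
      apply ex_series_geom. rewrite Rabs_right; lra. }
  destruct Hex as [F HF].
  assert (Hcv : Ccv (Fpartial c z) F).
  { intros eps Heps.
    pose proof (proj1 (filterlim_locally_ball_norm _ F) HF (mkposreal eps Heps)) as [N HN].
    exists N. intros n Hn. specialize (HN n Hn). unfold ball_norm in HN.
    rewrite Fpartial_sum. exact HN. }
  exists F. split; auto.
  set (M := Mc c k z).
  assert (HMm : Cmod M = m) by (apply Cmod_Fterm; auto).
  assert (HM0 : M <> Complex.RtoC 0).
  { intro H0. rewrite H0 in HMm. change (Complex.Cmod (Complex.RtoC 0) = m) in HMm.
    rewrite Cmod_0 in HMm. lra. }
  assert (Hb : Cmod (Csub M F) <= 2 * m / 3).
  { apply Rnot_lt_le. intro Hlt.
    set (eps := Cmod (Csub M F) - 2 * m / 3).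
    destruct (Hcv eps ltac:(unfold eps; lra)) as [N HN].
    destruct k as [|k']; [lia|].
    specialize (HN (S k' + N)%nat ltac:(lia)).
    pose proof (claimB c z (S k') Hc Hk HX N) as HB.
    pose proof (claimA c z (S k') Hc Hk HX k' ltac:(lia)) as HA.
    replace (S k' - k')%nat with 1%nat in HA by lia. simpl pow in HA.
    fold X m in HA, HB.
    assert (Hq : 0 <= (1/4)^N) by (apply pow_le; lra).
    set (SN := Fpartial c z (S k' + N)) in *.
    set (Sk := Fpartial c z (S k')) in *.
    set (Sk1 := Fpartial c z k') in *.
    assert (HSk : Sk = Cadd Sk1 M) by reflexivity.
    assert (E : Csub M F = Cadd (Cadd (Csub (RtoC 0) Sk1) (Csub (RtoC 0) (Csub SN Sk))) (Csub SN F)).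
    { rewrite HSk. destruct M, F, SN, Sk1. unfold Csub, Cadd, RtoC, Cre, Cim; simpl. f_equal; ring. }
    assert (Hneg : forall w : Cx, Cmod (Csub (RtoC 0) w) = Cmod w).
    { intros [a b]. unfold Cmod, Csub, RtoC, Cre, Cim; simpl. f_equal. ring. }
    assert (Cmod (Csub M F) <= Cmod Sk1 + Cmod (Csub SN Sk) + Cmod (Csub SN F)).
    { rewrite E. eapply Rle_trans. apply Cmod_triangle.
      apply Rplus_le_compat_r. eapply Rle_trans. apply Cmod_triangle.
      change (Cmod (Csub (RtoC 0) Sk1) + Cmod (Csub (RtoC 0) (Csub SN Sk)) <= Cmod Sk1 + Cmod (Csub SN Sk)).
      rewrite !Hneg. lra. }
    unfold eps in HN. assert (0 <= m * (1/4)^N) by (apply Rmult_le_pos; lra). lra. }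
  assert (Eq : Csub (RtoC 1) (Cdiv F M) = Cdiv (Csub M F) M).
  { change ((Complex.RtoC 1 - F / M)%C = ((M - F) / M)%C). field. exact HM0. }
  rewrite Eq. change (Complex.Cmod ((M - F) / M)%C <= 2/3).
  rewrite Cmod_div by exact HM0.
  change (Cmod (Csub M F) / Cmod M <= 2/3). rewrite HMm.
  apply Rmult_le_reg_r with m; auto. unfold Rdiv. rewrite Rmult_assoc, Rinv_l by lra. lra.
Qed.
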